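(* Let $n,m$ be positive integers and $\mathbf{r}=(r_1,\dots,r_m)$, $\mathbf{s}=(s_1,\dots,s_m)$ sequences of nonnegative integers with sums $r$ and $s$. Then \[ |\mathrm{SB}(n,\mathbf{r},\mathbf{s})| = |\mathrm{SB}^-(n,\mathbf{r},\mathbf{s})| \frac{\left((r+s+1)n+m\binom n2+\sum_{i=1}^m r_is_i\right)!} {\left((r+s+1)n+m\binom n2\right)!}. \]
   Context: For nonnegative integers $p,q$, the $(n,p,q)$-staircase is the set of cells $(i,j)$ (row $i$, column $j$) with $1\le i\le p+n$, $1\le j\le n+q$, $i\le j+p$; the cell $(j+p,j)$ ($1\le j\le n$) is its $j$th diagonal cell (row $i>p$ contains the diagonal cell $(i,i-p)$, column $j\le n$ contains $(j+p,j)$, other rows/columns contain none). The $(n,p,q)^-$-staircase is obtained by removing the cells with $i\le p$ and $j>n$. Take pages $\lambda^{(i)}$ = the $(n,r_i,s_i)$-staircase (resp. $(n,r_i,s_i)^-$-staircase), $1\le i\le m$, identifying the $j$th diagonal cells of all pages for each $j$. An $(n,\mathbf{r},\mathbf{s})$-Selberg book (resp. $(n,\mathbf{r},\mathbf{s})^-$-Selberg book) is a filling of the resulting cells with $1,\dots,N$ where $N=(r+s+1)n+m\binom n2+\sum_i r_is_i$ (resp. $N=(r+s+1)n+m\binom n2$), each used once, such that in each page every non-diagonal cell has entry larger than that of the diagonal cell in its row (if any) and smaller than that of the diagonal cell in its column (if any). $\mathrm{SB}(n,\mathbf{r},\mathbf{s})$ and $\mathrm{SB}^-(n,\mathbf{r},\mathbf{s})$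 denote these sets. *)

(* Defs.v *)
From mathcomp Require Import all_boot all_order all_algebra.
Set Implicit Arguments. Unset Strict Implicit. Unset Printing Implicit Defensive.

(* Parameters: n, m, and r s : 'I_m -> nat (page i is indexed by i : 'I_m,
   i.e. page i.+1 of the paper). *)

Definition rsum m (r : 'I_m -> nat) : nat := \sum_(i < m) r i.

(* Ambient finite type containing all cells:
   - inl j (j : 'I_n) is the (j+1)-th diagonal cell (shared by all pages);
   - inr (i, a, b) is the cell in row a, column b (1-indexed) of page i. *)
Definition ambient n m (r s : 'I_m -> nat) : finType :=
  ('I_n + ('I_m * 'I_(rsum r + n).+1 * 'I_(n + rsum s).+1))%type.

(* Non-diagonal cells of page i
   are the cells (a,b) of the (n,r_i,s_i)-staircase with a <> b + r_i
   (the cells with a = b + r_i are exactly the diagonal cells). *)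
Definition is_cell n m (r s : 'I_m -> nat) (minus : bool)
    (x : ambient n r s) : bool :=
  match x with
  | inl _ => true
  | inr (i, a, b) =>
      [&& 1 <= a, 1 <= (b : nat), a <= r i + n, b <= n + s i, a <= b + r i,
          a != b + r i :> nat &
          (minus ==> ~~ ((a <= r i) && (n < b)))]
  end.

Definition cell n m (r s : 'I_m -> nat) (minus : bool) : finType :=
  {x : ambient n r s | is_cell minus x}.

Definition below n m (r s : 'I_m -> nat) (x y : ambient n r s) : bool :=
  match x, y with
  (* diagonal cell j+1 lies in row j+1+r_i of page i: entries in that row
     are larger than the diagonal entry *)
  | inl j, inr (i, a, _) => (a : nat) == j.+1 + r i
  (* diagonal cell j+1 lies in column j+1 of every page: entries in that
     column are smaller than the diagonal entry *)
  | inr (_, _, b), inl j => (b : nat) == j.+1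
  | _, _ => false
  end.

Definition bookN n m (r s : 'I_m -> nat) (minus : bool) : nat :=
  (rsum r + rsum s + 1) * n + m * 'C(n, 2)
  + (if minus then 0 else \sum_(i < m) r i * s i).

Definition is_SB n m (r s : 'I_m -> nat) (minus : bool)
    (f : {ffun cell n r s minus -> 'I_(bookN n r s minus).+1}) : bool :=
  [&& [forall c, 0 < f c],
      injectiveb f,
      [forall k : 'I_(bookN n r s minus).+1,
          (0 < k) ==> [exists c, f c == k]] &
      [forall c, forall d, below (val c) (val d) ==> (f c < f d)]].

Definition SB n m (r s : 'I_m -> nat) (minus : bool) :=
  [set f : {ffun cell n r s minus -> 'I_(bookN n r s minus).+1}
     | is_SB f].

(* Main.v *)
Require Import Defs.
From mathcomp Require Import all_boot all_order all_algebra.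
From mathcomp Require Import zify.
Set Implicit Arguments. Unset Strict Implicit. Unset Printing Implicit Defensive.

Ltac fnorm := repeat match goal with H : context [@nat_of_ord _ _] |- _ => revert H end;
  repeat match goal with |- context [@nat_of_ord _ (@fun_of_fin _ _ _ ?f ?y)] =>
    let a := fresh "a" in set a := nat_of_ord (f y) end; intros.
Ltac splitifs := do 8 try (match goal with |- context [if ?c then _ else _] =>
   lazymatch c with context [if _ then _ else _] => fail | _ =>
    let H := fresh "H" in case: (boolP c) => H; [rewrite ?H /= | rewrite ?(negbTE H) /=] end end).
Ltac flia := fnorm; splitifs; lia.

Section Fill.
Variables (T : finType) (B : nat) (R : rel T).

Definition okF (A : {set T}) (N : nat) (f : {ffun T -> 'I_B.+1}) : bool :=
  [&& #|A| == N,
      [forall x, (x \notin A) ==> (nat_of_ord (f x) == 0%N)],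
      [forall x, (x \in A) ==> (0 < f x <= N)],
      [forall x, forall y, [&& x \in A, y \in A & nat_of_ord (f x) == f y] ==> (x == y)] &
      [forall x, forall y, [&& x \in A, y \in A & R x y] ==> (f x < f y)]].

Definition Fill A N := [set f | okF A N f].

Lemma okFP (A : {set T}) (N : nat) (f : {ffun T -> 'I_B.+1}) : reflect
  [/\ #|A| = N, (forall y, y \notin A -> nat_of_ord (f y) = 0),
      (forall y, y \in A -> 0 < f y <= N),
      (forall y z, y \in A -> z \in A -> nat_of_ord (f y) = f z -> y = z) &
      (forall y z, y \in A -> z \in A -> R y z -> f y < f z)] (okF A N f).
Proof.
apply: (iffP and5P).
  move=> [/eqP h1 /forallP h2 /forallP h3 /forallP h4 /forallP h5]; split => //.
  - by move=> y yA; apply/eqP; apply: (implyP (h2 y)).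
  - by move=> y yA; apply: (implyP (h3 y)).
  - move=> y z yA zA e; apply/eqP; move/forallP: (h4 y) => /(_ z) /implyP; apply.
    by rewrite yA zA e eqxx.
  - move=> y z yA zA e; move/forallP: (h5 y) => /(_ z) /implyP; apply.
    by rewrite yA zA e.
move=> [h1 h2 h3 h4 h5]; split.
- by apply/eqP.
- by apply/forallP => y; apply/implyP => yA; apply/eqP; apply: h2.
- by apply/forallP => y; apply/implyP => yA; apply: h3.
- apply/forallP => y; apply/forallP => z; apply/implyP => /and3P [yA zA /eqP e].
  by apply/eqP; apply: h4.
- apply/forallP => y; apply/forallP => z; apply/implyP => /and3P [yA zA e].
  by apply: h5.
Qed.

Section Step.
Variables (x : T) (A : {set T}) (N : nat).
Hypotheses (xA : x \in A) (cA : #|A| = N.+1) (NB : N.+1 <= B)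
  (free : forall z, ~~ R x z && ~~ R z x).

Definition V : {set 'I_B.+1} := [set v : 'I_B.+1 | 0 < v <= N.+1].

Lemma cardV : #|V| = N.+1.
Proof.
have -> : V = (fun k : 'I_N.+1 => inord k.+1 : 'I_B.+1) @: setT.
  apply/setP => v; rewrite inE; apply/idP/imsetP.
    move=> hv; exists (inord v.-1) => //; apply: val_inj => /=.
    rewrite inordK; rewrite inordK; flia.
  by move=> [k _ ->]; rewrite inordK; have := ltn_ord k; flia.
rewrite card_imset ?cardsT ?card_ord // => k1 k2 /(congr1 val) /=.
rewrite !inordK; try (have := ltn_ord k1; have := ltn_ord k2; flia).
by move=> [e]; apply: val_inj.
Qed.

Definition phi (f : {ffun T -> 'I_B.+1}) : 'I_B.+1 * {ffun T -> 'I_B.+1} :=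
  (f x, [ffun y => inord (if y == x then 0 else if f x < f y then (f y).-1 else f y)]).

Definition psi (p : 'I_B.+1 * {ffun T -> 'I_B.+1}) : {ffun T -> 'I_B.+1} :=
  [ffun y => if y == x then p.1 else inord (if p.2 y < p.1 then nat_of_ord (p.2 y) else (p.2 y).+1)].

Lemma phi2E f y : nat_of_ord ((phi f).2 y) =
   if y == x then 0 else if f x < f y then (f y).-1 else f y.
Proof.
rewrite ffunE inordK //; have := ltn_ord (f y).
by case: (y == x) => //; case: ifP => ?; flia.
Qed.

Lemma psiE (p : 'I_B.+1 * {ffun T -> 'I_B.+1}) (y : T) : p.1 <= N.+1 -> p.2 y <= N -> nat_of_ord (psi p y) =
   if y == x then nat_of_ord p.1 else if p.2 y < p.1 then nat_of_ord (p.2 y) else (p.2 y).+1.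
Proof.
move=> h1 h2; rewrite ffunE; case: (y == x) => //.
by rewrite inordK //; case: ifP => ?; flia.
Qed.

Lemma phi_in f : f \in Fill A N.+1 -> phi f \in setX V (Fill (A :\ x) N).
Proof.
rewrite !inE => /okFP [h1 h2 h3 h4 h5].
have fx := h3 x xA.
apply/andP; split; first by [].
apply/okFP; split.
- by have := cA; rewrite (cardsD1 x A) xA; flia.
- move=> y; rewrite phi2E !inE negb_and negbK; case: eqP => // yx /= yA.
  by have := h2 y yA; case: ifP => ?; flia.
- move=> y; rewrite phi2E !inE => /andP [yx yA]; rewrite (negbTE yx).
  have := h3 y yA.
  have : nat_of_ord (f y) <> f x by move=> e; move: (h4 _ _ yA xA e) => ey; rewrite ey eqxx in yx.
  by case: ifP => ?; flia.
- move=> y z; rewrite !phi2E !inE => /andP [yx yA] /andP [zx zA]; rewrite (negbTE yx) (negbTE zx).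
  have ney : nat_of_ord (f y) <> f x by move=> e; move: (h4 _ _ yA xA e) => ey; rewrite ey eqxx in yx.
  have nez : nat_of_ord (f z) <> f x by move=> e; move: (h4 _ _ zA xA e) => ez; rewrite ez eqxx in zx.
  move=> e; apply: h4 => //; move: e.
  by case: ifP => ?; case: ifP => ?; flia.
- move=> y z; rewrite !phi2E !inE => /andP [yx yA] /andP [zx zA] Ryz; rewrite (negbTE yx) (negbTE zx).
  have ney : nat_of_ord (f y) <> f x by move=> e; move: (h4 _ _ yA xA e) => ey; rewrite ey eqxx in yx.
  have nez : nat_of_ord (f z) <> f x by move=> e; move: (h4 _ _ zA xA e) => ez; rewrite ez eqxx in zx.
  have := h5 _ _ yA zA Ryz; have := h3 y yA; have := h3 z zA.
  by case: ifP => ?; case: ifP => ?; flia.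
Qed.

Lemma psiK f : f \in Fill A N.+1 -> psi (phi f) = f.
Proof.
rewrite inE => /okFP [h1 h2 h3 h4 h5].
have fx := h3 x xA.
apply/ffunP => y; apply: val_inj => /=.
have hy : nat_of_ord ((phi f).2 y) <= N.
  rewrite phi2E; case: (y =P x) => // /eqP yx.
  case: (boolP (y \in A)) => yA; last by have := h2 y yA; case: ifP => ?; flia.
  have ney : nat_of_ord (f y) <> f x by move=> e; move: (h4 _ _ yA xA e) => ey; rewrite ey eqxx in yx.
  by have := h3 y yA; case: ifP => ?; flia.
rewrite psiE //=; last by flia.
rewrite phi2E; case: (y =P x) => [-> //|/eqP yx].
case: (boolP (y \in A)) => yA; last by have e := h2 y yA; fnorm; rewrite e ltn0 /=; case: ifP => ?; flia.
have ney : nat_of_ord (f y) <> f x by move=> e; move: (h4 _ _ yA xA e) => ey; rewrite ey eqxx in yx.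
by have := h3 y yA; splitifs; flia.
Qed.

Lemma psi_in p : p \in setX V (Fill (A :\ x) N) -> psi p \in Fill A N.+1.
Proof.
case: p => v g; rewrite !inE /= => /andP [hv /okFP [h1 h2 h3 h4 h5]].
have gle y : nat_of_ord (g y) <= N.
  by case: (boolP (y \in A :\ x)) => yA; [have := h3 y yA; flia | rewrite h2].
have E y := @psiE (v, g) y (proj2 (andP hv)) (gle y).
simpl in E.
apply/okFP; split => //.
- move=> y yA; rewrite E; case: (y =P x) => [e|_]; first by rewrite e xA in yA.
  have : y \notin A :\ x by rewrite !inE (negbTE yA) andbF.
  by move/h2; flia.
- move=> y yA; rewrite E; case: (y =P x) => [//|/eqP yx].
  have : y \in A :\ x by rewrite !inE yx.
  move/h3; case: ifP => ?; flia.
- move=> y z yA zA; rewrite !E.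
  case: (y =P x) => [->|/eqP yx]; case: (z =P x) => [->|/eqP zx] //.
  + have zA' : z \in A :\ x by rewrite !inE zx.
    by have := h3 _ zA'; case: ifP => ?; flia.
  + have yA' : y \in A :\ x by rewrite !inE yx.
    by have := h3 _ yA'; case: ifP => ?; flia.
  + have zA' : z \in A :\ x by rewrite !inE zx.
    have yA' : y \in A :\ x by rewrite !inE yx.
    move=> e; apply: h4 => //; move: e.
    by case: ifP => ?; case: ifP => ?; flia.
- move=> y z yA zA Ryz.
  case: (y =P x) => [ex|/eqP yx]; first by have := free z; rewrite -ex Ryz.
  case: (z =P x) => [ex|/eqP zx]; first by have := free y; rewrite -ex Ryz andbF.
  have zA' : z \in A :\ x by rewrite !inE zx.
  have yA' : y \in A :\ x by rewrite !inE yx.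
  rewrite !E (negbTE yx) (negbTE zx).
  have := h5 _ _ yA' zA' Ryz.
  by case: ifP => ?; case: ifP => ?; flia.
Qed.

Lemma phiK p : p \in setX V (Fill (A :\ x) N) -> phi (psi p) = p.
Proof.
case: p => v g; rewrite !inE /= => /andP [hv /okFP [h1 h2 h3 h4 h5]].
have gle y : nat_of_ord (g y) <= N.
  by case: (boolP (y \in A :\ x)) => yA; [have := h3 y yA; flia | rewrite h2].
have E y := @psiE (v, g) y (proj2 (andP hv)) (gle y).
simpl in E.
congr pair; first by apply: val_inj; rewrite /= E eqxx.
apply/ffunP => y; apply: val_inj.
change (nat_of_ord ((phi (psi (v, g))).2 y) = g y).
rewrite phi2E !E eqxx.
case: (y =P x) => [->|/eqP yx].
  have : x \notin A :\ x by rewrite !inE eqxx.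
  by move/h2; flia.
by flia.
Qed.

Lemma step : #|Fill A N.+1| = N.+1 * #|Fill (A :\ x) N|.
Proof.
rewrite -(card_in_imset (f := phi)); last first.
  by move=> f1 f2 F1 F2 e; rewrite -(psiK F1) -(psiK F2) e.
have -> : phi @: Fill A N.+1 = setX V (Fill (A :\ x) N).
  apply/eqP; rewrite eqEsubset; apply/andP; split; apply/subsetP.
    by move=> _ /imsetP [f fF ->]; apply: phi_in.
  by move=> p pX; apply/imsetP; exists (psi p); [apply: psi_in | rewrite phiK].
by rewrite cardsX cardV.
Qed.
End Step.

Lemma fill_iter k (F A : {set T}) : #|F| = k -> F \subset A ->
  (forall y, y \in F -> forall z, ~~ R y z && ~~ R z y) -> #|A| <= B ->
  #|Fill A #|A| | * (#|A| - #|F|)`! = #|Fill (A :\: F) (#|A| - #|F|)| * #|A|`!.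
Proof.
elim: k F A => [|k IH] F A cF sFA fr AB.
  by move/eqP: cF; rewrite cards_eq0 => /eqP ->; rewrite setD0 cards0 subn0.
have /set0Pn [x xF] : F != set0 by rewrite -card_gt0 cF.
have xA : x \in A := subsetP sFA x xF.
have cA : #|A| = #|A :\ x|.+1 by rewrite (cardsD1 x A) xA.
have cF' : #|F :\ x| = k by move: cF; rewrite (cardsD1 x F) xF; case.
have NB' : #|A :\ x|.+1 <= B by rewrite -cA.
rewrite cA (step xA cA NB' (fr x xF)).
have sF' : F :\ x \subset A :\ x by apply: setSD.
have fr' : forall y, y \in F :\ x -> forall z, ~~ R y z && ~~ R z y.
  by move=> y; rewrite inE => /andP [_ /fr].
have := IH (F :\ x) (A :\ x) cF' sF' fr' ltac:(flia).
have -> : (A :\ x) :\: (F :\ x) = A :\: F.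
  apply/setP => y; rewrite !inE; case: (y =P x) => [->|] //=.
  by rewrite xF.
have -> : #|F| = #|F :\ x|.+1 by rewrite (cardsD1 x F) xF.
rewrite subSS factS => e.
by rewrite -mulnA e mulnCA.
Qed.

Section Transfer.
Variables (P : pred T) (N : nat).
Hypothesis NB : N <= B.

Definition SBset := [set f : {ffun {x | P x} -> 'I_N.+1} | [&& [forall c, 0 < f c], injectiveb f,
   [forall k : 'I_N.+1, (0 < k) ==> [exists c, f c == k]] &
   [forall c, forall d, R (val c) (val d) ==> (f c < f d)]]].

Definition emb (f : {ffun {x | P x} -> 'I_N.+1}) : {ffun T -> 'I_B.+1} :=
  [ffun y => inord (oapp (fun c => nat_of_ord (f c)) 0 (insub y))].

Lemma embS f y (Py : P y) : nat_of_ord (emb f y) = f (Sub y Py).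
Proof.
rewrite ffunE insubT /= inordK //; have := ltn_ord (f (Sub y Py)); lia.
Qed.

Lemma embN f y : ~~ P y -> nat_of_ord (emb f y) = 0.
Proof. by move=> Py; rewrite ffunE insubN //= inordK. Qed.

Lemma embE f (c : {x | P x}) : nat_of_ord (emb f (val c)) = f c.
Proof. by rewrite (embS f (valP c)); congr (nat_of_ord (f _)); apply: val_inj; rewrite SubK. Qed.

Lemma card_nz : #|[set k : 'I_N.+1 | 0 < k]| = N.
Proof.
have -> : [set k : 'I_N.+1 | 0 < k] = [set~ ord0].
  by apply/setP => -[[|k] hk]; rewrite !inE.
by rewrite cardsC1 card_ord.
Qed.

Lemma cardP : #|[set x | P x]| = #|{: {x | P x}}|.
Proof. by rewrite card_sig cardsE. Qed.

Lemma transfer : #|SBset| = #|Fill [set x | P x] N|.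
Proof.
rewrite -(card_in_imset (f := emb)); last first.
  move=> f1 f2 _ _ e; apply/ffunP => c; apply: val_inj.
  by have := congr1 (fun h : {ffun T -> 'I_B.+1} => nat_of_ord (h (val c))) e; rewrite /= !embE.
suff -> : emb @: SBset = Fill [set x | P x] N by []. apply/eqP; rewrite eqEsubset; apply/andP; split; apply/subsetP.
  move=> g /imsetP [f fS ->]; move: fS; rewrite inE => /and4P [/forallP pos /injectiveP inj /forallP sur /forallP Rr].
  rewrite inE; apply/okFP; split.
  - rewrite cardP -(card_imset _ inj); apply: (etrans _ card_nz); apply: eq_card => k.
    rewrite inE; apply/imsetP/idP => [[c _ ->] // | k0].
    by have /existsP [c /eqP <-] := implyP (sur k) k0; exists c.
  - by move=> y; rewrite inE => /embN.
  - move=> y; rewrite inE => Py; rewrite (embS f Py) pos /=.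
    by have := ltn_ord (f (Sub y Py)).
  - move=> y z; rewrite !inE => Py Pz; rewrite (embS f Py) (embS f Pz) => e.
    have : (Sub y Py : {x | P x}) = Sub z Pz by apply: inj; apply: val_inj.
    by move/(congr1 val); rewrite !SubK.
  - move=> y z; rewrite !inE => Py Pz Ryz; rewrite (embS f Py) (embS f Pz).
    by move/forallP: (Rr (Sub y Py)) => /(_ (Sub z Pz)) /implyP; apply; rewrite !SubK.
move=> g; rewrite inE => /okFP [h1 h2 h3 h4 h5].
pose f := [ffun c : {x | P x} => inord (g (val c)) : 'I_N.+1].
have fE c : nat_of_ord (f c) = g (val c).
  rewrite ffunE inordK //; have := h3 (val c); rewrite inE (valP c) => /(_ isT); flia.
have finj : injective f.
  move=> c d e; apply: val_inj; apply: h4; rewrite ?inE ?(valP c) ?(valP d) //.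
  by rewrite -!fE e.
apply/imsetP; exists f.
  rewrite inE; apply/and4P; split.
  - apply/forallP => c; rewrite fE; have := h3 (val c); rewrite inE (valP c) => /(_ isT).
    by case/andP.
  - by apply/injectiveP.
  - apply/forallP => k; apply/implyP => k0.
    have : k \in f @: setT.
      have : f @: setT \subset [set k : 'I_N.+1 | 0 < k].
        apply/subsetP => _ /imsetP [c _ ->]; rewrite inE fE.
        by have := h3 (val c); rewrite inE (valP c) => /(_ isT) /andP [].
      rewrite subEproper => /orP [/eqP -> | /proper_card]; first by rewrite inE.
      by rewrite card_nz card_imset // cardsT -cardP h1 ltnn.
    by move/imsetP => [c _ ->]; apply/existsP; exists c.
  - apply/forallP => c; apply/forallP => d; apply/implyP => Rcd.
    rewrite !fE; apply: h5 => //; by rewrite inE (valP _).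
apply/ffunP => y; apply: val_inj; apply/esym; change (nat_of_ord (emb f y) = g y).
case: (boolP (P y)) => Py.
  by rewrite (embS f Py) fE SubK.
by rewrite embN // h2 // inE.
Qed.
End Transfer.
End Fill.

Lemma Fill0 (T : finType) B (R : rel T) (A : {set T}) N : #|A| != N -> #|Fill B R A N| = 0.
Proof.
move=> hA; apply/eqP; rewrite cards_eq0; apply/eqP/setP => f; rewrite !inE.
by apply/negbTE/negP => /okFP [h]; rewrite h eqxx in hA.
Qed.


Section Main.
Variables (n m : nat) (r s : 'I_m -> nat).

Lemma leq_rsum (t : 'I_m -> nat) i : t i <= rsum t.
Proof. by rewrite /rsum (bigD1 i) //= leq_addr. Qed.

Definition A1 : {set ambient n r s} := [set x | is_cell false x].
Definition A0 : {set ambient n r s} := [set x | is_cell true x].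
Definition FF := A1 :\: A0.

Lemma A0sub : A0 \subset A1.
Proof.
apply/subsetP => -[j|[[i a] b]]; rewrite !inE //=.
by case/and4P => -> -> -> /and4P [-> -> -> _].
Qed.

Lemma inFF i (a : 'I_(rsum r + n).+1) (b : 'I_(n + rsum s).+1) :
  (inr (i, a, b) \in FF) = [&& 1 <= a, a <= r i, n < b & b <= n + s i].
Proof.
rewrite !inE /=; apply/idP/idP.
  case/andP => nc /and5P [h1 h2 h3 h4 /andP [h5 /andP [h6 _]]].
  by move: nc; rewrite ?h1 ?h2 ?h3 ?h4 ?h5 ?h6 /= ?negbK; case/andP => -> ->.
case/and4P => h1 h2 h3 h4; apply/andP; split.
  by apply/negP => /and5P [_ _ _ _ /andP [_ /andP [_]]]; rewrite h2 h3.
have := leq_rsum r i => hr.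
by apply/and5P; split; try lia.
Qed.

Lemma FF_free y : y \in FF -> forall z, ~~ below y z && ~~ below z y.
Proof.
case: y => [j|[[i a] b]]; first by rewrite !inE.
rewrite inFF => /and4P [h1 h2 h3 h4] [j'|[[i' a'] b']] //=.
by have := ltn_ord j'; lia.
Qed.

Lemma A1DFF : A1 :\: FF = A0.
Proof. by rewrite /FF setDDr setDv set0U; apply/setIidPr; exact: A0sub. Qed.

Definition emb2 (p : {i : 'I_m & ('I_(r i) * 'I_(s i))%type}) : ambient n r s :=
  inr (tag p, inord (tagged p).1.+1, inord (n + (tagged p).2.+1)).

Lemma emb2_inj : injective emb2.
Proof.
move=> [i1 [u1 v1]] [i2 [u2 v2]] /= [ei ea eb].
subst i2.
have hu1 := ltn_ord u1; have hu2 := ltn_ord u2; have hv1 := ltn_ord v1; have hv2 := ltn_ord v2.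
have := leq_rsum r i1; have := leq_rsum s i1 => hs hr.
move/(congr1 val): ea; move/(congr1 val): eb; rewrite /= !inordK; try lia.
move=> e2 e1; congr existT; congr pair; apply: val_inj => /=; lia.
Qed.

Lemma cardFF : #|FF| = \sum_(i < m) r i * s i.
Proof.
have -> : FF = emb2 @: setT.
  apply/setP => -[j|[[i a] b]].
    rewrite !inE /=; apply/esym/negbTE; apply/imsetP => -[p _].
    by rewrite /emb2.
  rewrite inFF; apply/idP/imsetP.
    case/and4P => h1 h2 h3 h4.
    have ha : a.-1 < r i by lia.
    have hb : b - n - 1 < s i by lia.
    exists (existT _ i (Ordinal ha, Ordinal hb)) => //.
    rewrite /emb2 /=; congr (inr (_, _, _)); apply: val_inj; rewrite /= inordK //; try lia.
      have := leq_rsum r i; lia.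
    have := leq_rsum s i; lia.
  move=> [[i' [u v]] _] [-> ea eb].
  have := ltn_ord u; have := ltn_ord v; have := leq_rsum r i'; have := leq_rsum s i'.
  move: ea eb => /(congr1 val) /= -> /(congr1 val) /= ->.
  move=> *; rewrite !inordK; lia.
rewrite card_imset; last exact: emb2_inj.
rewrite cardsT card_tagged sumnE big_map big_enum /=.
by apply: eq_bigr => i _; rewrite card_prod !card_ord.
Qed.


Lemma key : #|SB n r s false| * (bookN n r s true)`! = #|SB n r s true| * (bookN n r s false)`!.
Proof.
have NB0 : bookN n r s true <= bookN n r s false by rewrite /bookN addn0 leq_addr.
have e1 : #|SB n r s false| = #|Fill (bookN n r s false) (@below n m r s) A1 (bookN n r s false)|
  := @transfer _ (bookN n r s false) (@below n m r s) (is_cell false) _ (leqnn _).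
have e0 : #|SB n r s true| = #|Fill (bookN n r s false) (@below n m r s) A0 (bookN n r s true)|
  := @transfer _ (bookN n r s false) (@below n m r s) (is_cell true) _ NB0.
have eN : bookN n r s false = bookN n r s true + #|FF| by rewrite cardFF /bookN addn0.
have cA0 : #|A0| = #|A1| - #|FF|.
  rewrite /FF -(cardsID A0 A1) (setIidPr A0sub); lia.
have sF : FF \subset A1 by apply: subsetDl.
have cFA : #|FF| <= #|A1| by apply: subset_leq_card.
rewrite e1 e0; case: (boolP (#|A1| == bookN n r s false)) => hA; last first.
  rewrite (Fill0 _ _ hA) Fill0 ?mul0n //.
  rewrite cA0; apply: contra hA => /eqP h; apply/eqP; lia.
move/eqP: hA => hA.
have := @fill_iter _ (bookN n r s false) (@below n m r s) _ FF A1 erefl sF FF_free ltac:(lia).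
rewrite A1DFF hA.
have -> : bookN n r s false - #|FF| = bookN n r s true by lia.
by [].
Qed.

End Main.

Import GRing.Theory.
Local Open Scope ring_scope.

Theorem proposition4p4 (n m : nat) (r s : 'I_m -> nat) :
  (0 < n)%N -> (0 < m)%N ->
  (#|SB n r s false|%:R : rat) =
    #|SB n r s true|%:R
    * ((rsum r + rsum s + 1) * n + m * 'C(n, 2) + \sum_(i < m) r i * s i)`!%:R
    / ((rsum r + rsum s + 1) * n + m * 'C(n, 2))`!%:R.
Proof.
move=> _ _.
have E : bookN n r s true = ((rsum r + rsum s + 1) * n + m * 'C(n, 2))%N by rewrite /bookN addn0.
have k := @key n m r s; rewrite [X in (_ * X`!)%N = _]E in k.
have d0 : (((rsum r + rsum s + 1) * n + m * 'C(n, 2))`!%:R : rat) != 0.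
  by rewrite Num.Theory.pnatr_eq0 -lt0n fact_gt0.
rewrite -[LHS](mulfK d0) -[X in X / _ = _]natrM k natrM.
by [].
Qed.
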